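(* Let $\theta^{\circ}_1,\dots,\theta^{\circ}_m\in\mathbb{S}^{d-1}$ be pairwise orthogonal, let $a,b$ be as below, and for $x\in\mathbb{S}^{d-1}$ define $$q(x)=ad\sum_{j=1}^m\sigma(\langle\theta^{\circ}_j,x\rangle)+bd\sum_{j_1=1}^m\sum_{j_2=1}^m\langle\theta^{\circ}_{j_1},x\rangle\mathbb{1}\{\langle\theta^{\circ}_{j_2},x\rangle\ge0\}$$ (equivalently $q(x)=(x^\top\mathbb{1}\{\langle\theta^{\circ}_1,x\rangle\ge0\},\dots,x^\top\mathbb{1}\{\langle\theta^{\circ}_m,x\rangle\ge0\})\,\big(\mathbb{E}[\tfrac1nX_0X_0^\top]\big)^{-1}(\theta^{\circ}_1;\dots;\theta^{\circ}_m)$). Then $0\le q(x)\le(a-bm)d\sqrt m$ for every $x\in\mathbb{S}^{d-1}$.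
   Context: $\sigma(u)=\max\{u,0\}$; $a=\frac{2\pi(\pi m+\pi+2)}{D}$, $b=-\frac{2\pi^2}{D}$ with $D=2\pi m^2+(\pi^2-2\pi+4)m+\pi^2+4\pi-4$. $X_0\in\mathbb{R}^{md\times n}$ has $i$-th column $(x_i\mathbb{1}\{\langle\theta^{\circ}_1,x_i\rangle\ge0\};\dots;x_i\mathbb{1}\{\langle\theta^{\circ}_m,x_i\rangle\ge0\})$ with $x_i$ i.i.d. uniform on $\mathbb{S}^{d-1}$. *)

(* Defs.v *)
From HB Require Import structures.
From mathcomp Require Import all_boot all_order all_algebra.
From mathcomp Require Import all_classical all_reals all_analysis.
Set Implicit Arguments. Unset Strict Implicit. Unset Printing Implicit Defensive.
Import Order.TTheory GRing.Theory Num.Theory.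
Local Open Scope ring_scope.

Definition dotv {R : realType} {d : nat} (u v : 'rV[R]_d) : R :=
  \sum_(i < d) u 0 i * v 0 i.

Definition on_sphere {R : realType} {d : nat} (x : 'rV[R]_d) : Prop :=
  dotv x x = 1.

Definition relu {R : realType} (u : R) : R := Num.max u 0.

Definition ind_nonneg {R : realType} (u : R) : R := if 0 <= u then 1 else 0.

Definition Dconst {R : realType} (m : nat) : R :=
  2 * pi * (m%:R) ^+ 2 + (pi ^+ 2 - 2 * pi + 4) * m%:R + pi ^+ 2 + 4 * pi - 4.

Definition aconst {R : realType} (m : nat) : R :=
  2 * pi * (pi * m%:R + pi + 2) / Dconst m.

Definition bconst {R : realType} (m : nat) : R :=
  - (2 * pi ^+ 2) / Dconst m.

Definition qfun {R : realType} {m d : nat} (th : 'I_m -> 'rV[R]_d) (x : 'rV[R]_d) : R :=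
  aconst m * d%:R * \sum_(j < m) relu (dotv (th j) x)
  + bconst m * d%:R * \sum_(j1 < m) \sum_(j2 < m)
      dotv (th j1) x * ind_nonneg (dotv (th j2) x).

(* Main.v *)
Set Warnings "-all".
Require Import Defs.
From HB Require Import structures.
From mathcomp Require Import all_boot all_order all_algebra.
From mathcomp Require Import all_classical all_reals all_analysis.
From mathcomp Require Import ring lra.
Set Warnings "-all".
Import Order.TTheory GRing.Theory Num.Theory.
Local Open Scope ring_scope.

Section S.
Variables (R : realType) (d : nat).
Implicit Types (u v w : 'rV[R]_d).

Lemma dotvC u v : dotv u v = dotv v u.
Proof. by rewrite /dotv; apply: eq_bigr => i _; rewrite mulrC. Qed.

Lemma dotvBl u v w : dotv (u - v) w = dotv u w - dotv v w.
Proof.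
rewrite /dotv -sumrB; apply: eq_bigr => i _; rewrite !mxE; ring.
Qed.

Lemma dotv_suml (I : finType) (f : I -> R) (g : I -> 'rV[R]_d) w :
  dotv (\sum_j f j *: g j) w = \sum_j f j * dotv (g j) w.
Proof.
rewrite /dotv.
under eq_bigr => i _ do rewrite summxE big_distrl /=.
rewrite exchange_big /=; apply: eq_bigr => j _.
rewrite big_distrr /=; apply: eq_bigr => i _; rewrite !mxE; ring.
Qed.

Lemma dotv_ge0 u : 0 <= dotv u u.
Proof. by apply: sumr_ge0 => i _; rewrite -expr2 sqr_ge0. Qed.
End S.

Lemma bessel (R : realType) (m d : nat) (th : 'I_m -> 'rV[R]_d)
  (hunit : forall j, on_sphere (th j))
  (horth : forall j1 j2, j1 != j2 -> dotv (th j1) (th j2) = 0)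
  (x : 'rV[R]_d) (hx : on_sphere x) :
  \sum_j (dotv (th j) x) ^+ 2 <= 1.
Proof.
set s := \sum_j dotv (th j) x *: th j.
have h1 : dotv s x = \sum_j (dotv (th j) x) ^+ 2.
  by rewrite /s dotv_suml; apply: eq_bigr => j _; rewrite expr2.
have h2 : dotv s s = \sum_j (dotv (th j) x) ^+ 2.
  rewrite {1}/s dotv_suml; apply: eq_bigr => j _.
  rewrite [dotv (th j) s]dotvC /s dotv_suml (bigD1 j) //= big1 ?addr0.
    by rewrite dotvC hunit mulr1 expr2.
  by move=> k hk; rewrite dotvC horth ?mulr0 // eq_sym.
have := @dotv_ge0 _ _ (x - s).
rewrite dotvBl [dotv x (x - s)]dotvC [dotv s (x - s)]dotvC !dotvBl [dotv x s]dotvC h1 h2 hx.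
lra.
Qed.

Lemma cs_sum (R : realType) (m : nat) (a : 'I_m -> R) :
  (\sum_j a j) ^+ 2 <= m%:R * \sum_j a j ^+ 2.
Proof.
have H : 0 <= \sum_i \sum_j (a i - a j) ^+ 2.
  by apply: sumr_ge0 => i _; apply: sumr_ge0 => j _; apply: sqr_ge0.
have E1 : \sum_(i < m) \sum_(j < m) (a i - a j) ^+ 2 =
   \sum_(i < m) \sum_(j < m) a i ^+ 2 + \sum_(i < m) \sum_(j < m) a j ^+ 2
   - 2 * \sum_(i < m) \sum_(j < m) a i * a j.
  have e : forall i j, (a i - a j) ^+ 2 = a i ^+ 2 + a j ^+ 2 - 2 * (a i * a j).
    by move=> i j; ring.
  under eq_bigr => i _ do under eq_bigr => j _ do rewrite e.
  under eq_bigr => i _ do rewrite sumrB big_split /=.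
  rewrite sumrB big_split /= mulr_sumr; congr (_ - _).
  by apply: eq_bigr => i _; rewrite mulr_sumr.
have E2 : \sum_i \sum_j a i * a j = (\sum_j a j) ^+ 2.
  by rewrite expr2 big_distrl /=; apply: eq_bigr => i _; rewrite big_distrr.
have E3 : \sum_(i < m) \sum_(j < m) a i ^+ 2 = m%:R * \sum_j a j ^+ 2.
  rewrite mulr_sumr; apply: eq_bigr => i _.
  by rewrite sumr_const card_ord mulr_natl.
have E4 : \sum_(i < m) \sum_(j < m) a j ^+ 2 = m%:R * \sum_j a j ^+ 2.
  by rewrite sumr_const card_ord mulr_natl.
rewrite E1 E2 E3 E4 in H; lra.
Qed.

Lemma relu_facts (R : realType) (u : R) :
  [/\ relu u - relu (-u) = u, 0 <= relu u, relu u + relu (-u) = `|u|,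
      0 <= ind_nonneg u & ind_nonneg u <= 1].
Proof.
rewrite /relu /ind_nonneg; case: (leP 0 u) => h; case: (leP 0 (-u)) => h'.
- rewrite ger0_norm //; split => //; lra.
- rewrite ger0_norm //; split => //; lra.
- rewrite ltr0_norm //; split => //; lra.
- lra.
Qed.

Lemma consts (R : realType) (m : nat) :
  0 < aconst m :> R /\ bconst m <= 0 :> R /\ 0 < aconst m + bconst m * m%:R :> R.
Proof.
have p2 : (2 : R) <= pi by apply: pi_ge2.
have m0 : (0 : R) <= m%:R by [].
have D0 : (0 : R) < Dconst m.
  have h1 : 0 <= pi * m%:R ^+ 2 :> R by rewrite mulr_ge0 ?sqr_ge0 //; lra.
  have h2 : 0 <= ((pi - 1) ^+ 2 + 3) * m%:R :> R by rewrite mulr_ge0 // addr_ge0 ?sqr_ge0.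
  have h3 : 0 <= (pi - 2) * (pi + 6) :> R by rewrite mulr_ge0 //; lra.
  rewrite /Dconst; nra.
set Di := (Dconst m : R)^-1.
have Di0 : 0 < Di by rewrite invr_gt0.
have ea : aconst m = 2 * pi * (pi * m%:R + pi + 2) * Di by [].
have eb : bconst m = - (2 * pi ^+ 2) * Di by [].
have pp : 0 < pi :> R by lra.
rewrite ea eb; split; [|split].
- by rewrite mulr_gt0 // mulr_gt0 ?mulr_gt0 //; nra.
- rewrite mulNr oppr_le0; apply: mulr_ge0; [apply: mulr_ge0 => //; apply: sqr_ge0 | exact: ltW].
- have -> : 2 * pi * (pi * m%:R + pi + 2) * Di + - (2 * pi ^+ 2) * Di * m%:R
     = 2 * pi * (pi + 2) * Di by ring.
  by rewrite mulr_gt0 // mulr_gt0 ?mulr_gt0 //; lra.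
Qed.

Theorem mainTheorem6 (R : realType) (m d : nat) (th : 'I_m -> 'rV[R]_d)
  (hunit : forall j, on_sphere (th j))
  (horth : forall j1 j2, j1 != j2 -> dotv (th j1) (th j2) = 0)
  (x : 'rV[R]_d) (hx : on_sphere x) :
  0 <= qfun th x /\
  qfun th x <= (aconst m - bconst m * m%:R) * d%:R * Num.sqrt (m%:R).
Proof.
set c := fun j => dotv (th j) x.
set P := \sum_j relu (c j).
set N := \sum_j relu (- c j).
set S := \sum_j c j.
set K := \sum_j ind_nonneg (c j).
set T := \sum_j `|c j|.
have eq : qfun th x = d%:R * (aconst m * P + bconst m * (S * K)).
  have e : \sum_(j1 < m) \sum_(j2 < m) dotv (th j1) x * ind_nonneg (dotv (th j2) x)
      = S * K.
    by rewrite /S /K big_distrl /=; apply: eq_bigr => j _; rewrite big_distrr.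
  rewrite /qfun e /P /c; ring.
have eS : S = P - N.
  rewrite /S /P /N -sumrB; apply: eq_bigr => j _.
  by have [-> _ _ _ _] := @relu_facts _ (c j).
have eT : P + N = T.
  rewrite /T /P /N -big_split; apply: eq_bigr => j _.
  by have [h1 h2 h3 h4 h5] := @relu_facts _ (c j); rewrite -h3.
have P0 : 0 <= P by apply: sumr_ge0 => j _; have [_ -> _ _ _] := @relu_facts _ (c j).
have N0 : 0 <= N by apply: sumr_ge0 => j _; have [_ -> _ _ _] := @relu_facts _ (- c j).
have K0 : 0 <= K by apply: sumr_ge0 => j _; have [_ _ _ -> _] := @relu_facts _ (c j).
have Km : K <= m%:R.
  have -> : (m%:R : R) = \sum_(j < m) 1 by rewrite sumr_const card_ord.
  by apply: ler_sum => j _; have [_ _ _ _ ->] := @relu_facts _ (c j).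
have Tm : T <= Num.sqrt m%:R.
  have T0 : 0 <= T by apply: sumr_ge0 => j _.
  rewrite -(ger0_norm T0) -sqrtr_sqr; apply: ler_wsqrtr.
  have h1 := @cs_sum _ _ (fun j => `|c j|).
  have h2 := @bessel _ _ _ _ hunit horth _ hx.
  have e2 : \sum_j `|c j| ^+ 2 = \sum_j (dotv (th j) x) ^+ 2.
    by apply: eq_bigr => j _; rewrite real_normK // num_real.
  rewrite e2 in h1.
  apply: (le_trans h1); rewrite -[X in _ <= X]mulr1; apply: ler_wpM2l => //.
have [a0 [b0 ab0]] := consts R m.
set a := aconst m in a0 ab0 eq *.
set b := bconst m in b0 ab0 eq *.
have d0 : (0 : R) <= d%:R by [].
have sm0 : 0 <= Num.sqrt (m%:R : R) by apply: sqrtr_ge0.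
have bm : 0 <= (- b) * m%:R by apply: mulr_ge0; lra.
have Q0 : 0 <= a * P + b * (S * K).
  have e : a * P + b * (S * K) = (a + b * K) * P + (- b * K) * N.
    by rewrite eS; ring.
  have hh : 0 <= (- b) * (m%:R - K) by apply: mulr_ge0; lra.
  have h1 : 0 <= a + b * K by nra.
  rewrite e addr_ge0 // mulr_ge0 // mulr_ge0 //; lra.
have Q1 : a * P + b * (S * K) <= (a - b * m%:R) * Num.sqrt m%:R.
  have e : (a - b * m%:R) * (P + N) - (a * P + b * (S * K)) =
     (- b) * (m%:R + K) * P + (a + b * K - b * m%:R) * N.
    by rewrite eS; ring.
  have hh : 0 <= (- b) * (m%:R - K) by apply: mulr_ge0; lra.
  have h1 : 0 <= (a - b * m%:R) * (P + N) - (a * P + b * (S * K)).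
    rewrite e addr_ge0 // mulr_ge0 //; [apply: mulr_ge0; lra | nra].
  have h2 : (a - b * m%:R) * (P + N) <= (a - b * m%:R) * Num.sqrt m%:R.
    apply: ler_wpM2l; last by rewrite eT.
    have : 0 <= (- b) * m%:R by apply: mulr_ge0; lra.
    lra.
  lra.
rewrite eq; split; first exact: mulr_ge0.
have -> : (a - b * m%:R) * d%:R * Num.sqrt m%:R = d%:R * ((a - b * m%:R) * Num.sqrt m%:R)
  by ring.
exact: ler_wpM2l.
Qed.
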